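(* Let $G=(V,E)$ be a finite, undirected, connected graph with unit edge weights and vertex set $V=\{v_1,\dots,v_N\}$, and let $L=D-A$ be its graph Laplacian. Let $\phi_{\lambda_1},\dots,\phi_{\lambda_N}$ be an orthonormal basis of $\mathbb{C}^N$ consisting of eigenvectors of $L$. For $t\ge 0$ let $H_t=e^{-tL}$, let $D_i(t)=\operatorname{diag}(H_t(\cdot,v_i))$, and let $\psi_{ij}(t)=D_i(t)\phi_{\lambda_j}$ for $i,j\in\{1,\dots,N\}$. Then for every $t\ge 0$ the family $\{\psi_{ij}(t)\}_{i,j=1}^N$ is a frame for $\mathbb{C}^N$, and its frame operator $S(t)=\sum_{i,j=1}^N \psi_{ij}(t)\psi_{ij}(t)^*$ is the diagonal matrix $$S(t)=\sum_{i=1}^N D_i(t)^2.$$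
   Context: The graph Laplacian acts by $Lf(v)=\sum_{u\sim v}(f(v)-f(u))$; in matrix form $L=D-A$ with $A$ the adjacency matrix and $D$ the diagonal degree matrix. $\mathbb{C}^N$ is identified with functions on $V$ with the inner product $\langle f,g\rangle=\sum_{v\in V}f(v)\overline{g(v)}$. $H_t(\cdot,v_i)$ denotes the $i$-th column of $H_t$, and $\operatorname{diag}(x)$ is the diagonal matrix with diagonal entries $x$. A family $\{\psi_k\}$ is a frame for $\mathbb{C}^N$ if there exist $0<A\le B$ with $A\|f\|^2\le\sum_k|\langle f,\psi_k\rangle|^2\le B\|f\|^2$ for all $f\in\mathbb{C}^N$. *)

(* Defs.v *)
From HB Require Import structures.
From mathcomp Require Import all_boot all_order all_algebra.
From mathcomp Require Import all_classical all_reals all_analysis.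
From mathcomp Require Import complex.
Set Implicit Arguments. Unset Strict Implicit. Unset Printing Implicit Defensive.
Import Order.TTheory GRing.Theory Num.Theory numFieldNormedType.Exports.
Local Open Scope ring_scope.

Definition simple_graph (N : nat) (adj : rel 'I_N) : Prop :=
  (forall u, ~~ adj u u) /\ (forall u v, adj u v = adj v u).

Definition connected_graph (N : nat) (adj : rel 'I_N) : Prop :=
  forall u v, connect adj u v.

Definition laplacian (R : pzRingType) (N : nat) (adj : rel 'I_N) : 'M[R]_N :=
  \matrix_(u, v) ((if u == v then #|[set w | adj u w]|%:R else 0)
                  - (adj u v)%:R).

Definition mx_exp (R : realType) (N : nat) (M : 'M[R]_N) : 'M[R]_N :=
  \matrix_(i, j) limn (fun n : nat =>
      (\sum_(k < n) (k`!%:R)^-1 *: (M ^+ k)) i j).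

Definition heat_kernel (R : realType) (N : nat) (adj : rel 'I_N) (t : R)
  : 'M[R]_N := mx_exp (- t *: laplacian R adj).

Definition rc (R : rcfType) (x : R) : R[i] := (x%:C)%C.

Definition cinner (R : rcfType) (N : nat) (f g : 'cV[R[i]]_N) : R[i] :=
  \sum_(v < N) f v 0 * (g v 0)^*.

Definition Dmat (R : realType) (N : nat) (adj : rel 'I_N) (t : R) (i : 'I_N)
  : 'M[R[i]]_N :=
  diag_mx (\row_v (rc (heat_kernel adj t v i))).

Definition psi (R : realType) (N : nat) (adj : rel 'I_N)
  (phi : 'I_N -> 'cV[R[i]]_N) (t : R) (i j : 'I_N) : 'cV[R[i]]_N :=
  Dmat adj t i *m phi j.

Definition adjmx (R : rcfType) (m n : nat) (M : 'M[R[i]]_(m, n)) : 'M[R[i]]_(n, m) :=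
  (map_mx (fun z => z^*) M)^T.

Definition is_frame (R : rcfType) (N : nat) (I : finType) (F : I -> 'cV[R[i]]_N) : Prop :=
  exists A B : R, 0 < A /\ A <= B /\
    forall f : 'cV[R[i]]_N,
      (rc A * cinner f f <= \sum_(k : I) `|cinner f (F k)| ^+ 2) /\
      (\sum_(k : I) `|cinner f (F k)| ^+ 2 <= rc B * cinner f f).

(* Main.v *)
Require Import Defs.
From HB Require Import structures.
From mathcomp Require Import all_boot all_order all_algebra.
From mathcomp Require Import all_classical all_reals all_analysis.
From mathcomp Require Import complex ring.
Import Order.TTheory GRing.Theory Num.Theory numFieldNormedType.Exports.
Local Open Scope ring_scope.

Lemma complete_phi (R : realType) (N : nat) (phi : 'I_N -> 'cV[R[i]]_N)
  (Horth : forall j k, cinner (phi j) (phi k) = (j == k)%:R) u w :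
  \sum_j phi j u 0 * (phi j w 0)^*%C = (u == w)%:R.
Proof.
pose B : 'M[R[i]]_N := \matrix_(u, j) phi j u 0.
pose A : 'M[R[i]]_N := \matrix_(j, u) (phi j u 0)^*%C.
have AB : A *m B = 1%:M.
  apply/matrixP => j k; rewrite !mxE.
  rewrite eq_sym -Horth /cinner.
  apply: eq_bigr => v _; rewrite !mxE mulrC //.
have := mulmx1C AB => /matrixP /(_ u w); rewrite !mxE => <-.
by apply: eq_bigr => j _; rewrite !mxE.
Qed.

Lemma parseval (R : realType) (N : nat) (phi : 'I_N -> 'cV[R[i]]_N)
  (Horth : forall j k, cinner (phi j) (phi k) = (j == k)%:R) (g : 'I_N -> R[i]) :
  \sum_j `|\sum_v g v * (phi j v 0)^*%C| ^+ 2 = \sum_v g v * (g v)^*%C.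
Proof.
under eq_bigr => j _ do rewrite sqr_normc rmorph_sum mulr_suml.
rewrite exchange_big /=; apply: eq_bigr => v _.
under eq_bigr => j _ do rewrite mulr_sumr.
rewrite exchange_big /=.
have E : forall w, \sum_(j < N) g v * (phi j v 0)^*%C * (g w * (phi j w 0)^*%C)^*%C
   = g v * (g w)^*%C * (w == v)%:R.
  move=> w; under eq_bigr => j _ do rewrite rmorphM /= conjcK mulrACA.
  rewrite -mulr_sumr; congr (_ * _); rewrite -(@complete_phi _ _ _ Horth).
  by apply: eq_bigr => j _; rewrite mulrC.
under eq_bigr => w _ do rewrite E.
rewrite (bigD1 v) //= eqxx mulr1 big1 ?addr0 // => w /negbTE ->.
by rewrite mulr0.
Qed.
Lemma conjE (R: rcfType) (x : R[i]) : Num.conj x = conjc x. Proof. reflexivity. Qed.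
Lemma conjcM (R: rcfType) (x y : R[i]) : conjc (x * y) = conjc x * conjc y.
Proof. exact: rmorphM. Qed.
Lemma conjcD (R: rcfType) (x y : R[i]) : conjc (x + y) = conjc x + conjc y.
Proof. exact: rmorphD. Qed.
Lemma conjc_sum (R: rcfType) (I : Type) (r : seq I) (P : pred I) (F : I -> R[i]) :
  conjc (\sum_(i <- r | P i) F i) = \sum_(i <- r | P i) conjc (F i).
Proof. exact: rmorph_sum. Qed.

Lemma lap_sym (R : realType) (N : nat) (adj : rel 'I_N) (Hs : simple_graph adj) u v :
  laplacian R adj u v = laplacian R adj v u.
Proof.
rewrite !mxE (proj2 Hs u v) eq_sym; case: eqP => [->|] //.
Qed.

Lemma lam_real (R : realType) (N : nat) (adj : rel 'I_N) (Hs : simple_graph adj)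
  (phi : 'cV[R[i]]_N) (lam : R[i]) (Hn : cinner phi phi = 1)
  (Heig : map_mx (@rc R) (laplacian R adj) *m phi = lam *: phi) :
  lam = rc (complex.Re lam).
Proof.
have Ls := @lap_sym R N adj Hs.
move: Heig Ls; set L := laplacian R adj; clearbody L => Heig Ls.
have h1 : cinner (map_mx (@rc R) L *m phi) phi = lam.
  rewrite Heig /cinner -[RHS]mulr1 -Hn /cinner mulr_sumr.
  by apply: eq_bigr => v _; rewrite !mxE mulrA.
have h2 : (cinner (map_mx (@rc R) L *m phi) phi)^*%C
     = cinner (map_mx (@rc R) L *m phi) phi.
  rewrite /cinner conjc_sum.
  under eq_bigr => v _ do rewrite !mxE conjE conjcM conjcK conjc_sum mulr_suml.
  under [RHS]eq_bigr => v _ do rewrite !mxE mulr_suml.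
  rewrite exchange_big /=; apply: eq_bigr => v _; apply: eq_bigr => w _.
  rewrite !mxE conjcM /rc conjc_real Ls conjE -!mulrA [(phi v 0)^*%C * _]mulrC //.
rewrite h1 in h2.
by rewrite /rc ReJ_add h2 -mulr2n -[lam *+ 2]mulr_natr mulfK.
Qed.

Lemma BA1 (R : realType) (N : nat) (phi : 'I_N -> 'cV[R[i]]_N)
  (Horth : forall j k, cinner (phi j) (phi k) = (j == k)%:R) :
  (\matrix_(u, j) phi j u 0) *m (\matrix_(j, u) (phi j u 0)^*%C) = 1%:M.
Proof.
apply/matrixP => u w; rewrite !mxE -(@complete_phi _ _ _ Horth).
by apply: eq_bigr => j _; rewrite !mxE.
Qed.

Lemma rcE (R : realType) : @rc R = real_complex R.
Proof. by []. Qed.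

Lemma pow_col (R : realType) (N : nat) (adj : rel 'I_N) (Hs : simple_graph adj)
  (phi : 'cV[R[i]]_N) (lam : R[i]) (Hn : cinner phi phi = 1)
  (Heig : map_mx (@rc R) (laplacian R adj) *m phi = lam *: phi) (t : R) k :
  map_mx (@rc R) ((- t *: laplacian R adj) ^+ k) *m phi
    = rc ((- t * complex.Re lam) ^+ k) *: phi.
Proof.
have Hl := @lam_real R N adj Hs phi lam Hn Heig.
elim: k => [|k IH].
  by rewrite !expr0 rcE map_mx1 mul1mx rmorph1 scale1r.
rewrite exprS -mulmxE rcE map_mxM -mulmxA -rcE IH -scalemxAr.
rewrite rcE map_mxZ -scalemxAl -rcE Heig !scalerA Hl.
congr (_ *: _); rewrite !rcE exprS !rmorphM /=.
by rewrite [RHS]mulrC [RHS]mulrA.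
Qed.

Lemma pow_entry (R : realType) (N : nat) (adj : rel 'I_N) (Hs : simple_graph adj)
  (phi : 'I_N -> 'cV[R[i]]_N) (lam : 'I_N -> R[i])
  (Horth : forall j k, cinner (phi j) (phi k) = (j == k)%:R)
  (Heig : forall j, map_mx (@rc R) (laplacian R adj) *m phi j = lam j *: phi j)
  (t : R) k u w :
  rc (((- t *: laplacian R adj) ^+ k) u w)
    = \sum_j rc ((- t * complex.Re (lam j)) ^+ k) * (phi j u 0 * (phi j w 0)^*%C).
Proof.
have := mulmx1 (map_mx (@rc R) ((- t *: laplacian R adj) ^+ k)).
rewrite -(@BA1 _ _ _ Horth) mulmxA => /matrixP /(_ u w).
rewrite [in RHS]mxE => E.
rewrite -E mxE.
apply: eq_bigr => j _.
have Hn : cinner (phi j) (phi j) = 1 by rewrite Horth eqxx.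
have := @pow_col R N adj Hs (phi j) (lam j) Hn (Heig j) t k.
move=> /matrixP /(_ u 0); rewrite !mxE => E2.
rewrite mulrA -E2; congr (_ * _); apply: eq_bigr => v _; rewrite !mxE //.
Qed.

Lemma sum_entry (R : realType) (N : nat) (adj : rel 'I_N) (Hs : simple_graph adj)
  (phi : 'I_N -> 'cV[R[i]]_N) (lam : 'I_N -> R[i])
  (Horth : forall j k, cinner (phi j) (phi k) = (j == k)%:R)
  (Heig : forall j, map_mx (@rc R) (laplacian R adj) *m phi j = lam j *: phi j)
  (t : R) n u :
  (\sum_(k < n) (k`!%:R)^-1 *: ((- t *: laplacian R adj) ^+ k)) u u
  = \sum_j series (exp_coeff (- t * complex.Re (lam j))) n *
       (complex.Re (phi j u 0) ^+ 2 + complex.Im (phi j u 0) ^+ 2).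
Proof.
apply: (@complexI R).
rewrite summxE !rmorph_sum /=.
under eq_bigr => k _ do rewrite mxE rmorphM /= -!rcE (@pow_entry R N adj Hs phi lam Horth Heig) mulr_sumr.
rewrite exchange_big /=; apply: eq_bigr => j _.
rewrite rcE rmorphM /= add_Re2_Im2 sqr_normc -rcE seriesEord rcE rmorph_sum mulr_suml.
apply: eq_bigr => k _; rewrite exp_coeffE /= !rmorphM /= !rmorphXn /= mulrA.
by [].
Qed.

Local Open Scope classical_set_scope.
Lemma cvg_fsum (R : realType) (I : Type) (s : seq I) (f : I -> nat -> R) (l : I -> R) :
  (forall i, f i n @[n --> \oo] --> l i) ->
  \sum_(i <- s) f i n @[n --> \oo] --> \sum_(i <- s) l i.
Proof.
move=> H; elim: s => [|a s IH].
  under eq_fun => n do rewrite big_nil.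
  by rewrite big_nil; exact: cvg_cst.
under eq_fun => n do rewrite big_cons.
by rewrite big_cons; apply: cvgD.
Qed.

Lemma exp_cvg (R : realType) (x : R) : series (exp_coeff x) n @[n --> \oo] --> expR x.
Proof. exact: is_cvg_series_exp_coeff. Qed.
Local Close Scope classical_set_scope.

Lemma heat_diag (R : realType) (N : nat) (adj : rel 'I_N) (Hs : simple_graph adj)
  (phi : 'I_N -> 'cV[R[i]]_N) (lam : 'I_N -> R[i])
  (Horth : forall j k, cinner (phi j) (phi k) = (j == k)%:R)
  (Heig : forall j, map_mx (@rc R) (laplacian R adj) *m phi j = lam j *: phi j)
  (t : R) u :
  heat_kernel adj t u u = \sum_j expR (- t * complex.Re (lam j)) *
       (complex.Re (phi j u 0) ^+ 2 + complex.Im (phi j u 0) ^+ 2).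
Proof.
rewrite /heat_kernel /mx_exp mxE.
under eq_fun => n do rewrite (@sum_entry R N adj Hs phi lam Horth Heig).
apply: cvg_lim => //.
apply: cvg_fsum => j; apply: cvgMl.
exact: exp_cvg.
Qed.

Lemma heat_pos (R : realType) (N : nat) (adj : rel 'I_N) (Hs : simple_graph adj)
  (phi : 'I_N -> 'cV[R[i]]_N) (lam : 'I_N -> R[i])
  (Horth : forall j k, cinner (phi j) (phi k) = (j == k)%:R)
  (Heig : forall j, map_mx (@rc R) (laplacian R adj) *m phi j = lam j *: phi j)
  (t : R) u : 0 < heat_kernel adj t u u.
Proof.
rewrite (@heat_diag R N adj Hs phi lam Horth Heig).
set r := fun j => complex.Re (phi j u 0) ^+ 2 + complex.Im (phi j u 0) ^+ 2.
have r0 : forall j, 0 <= r j by move=> j; rewrite /r addr_ge0 // sqr_ge0.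
have s1 : \sum_j r j = 1.
  apply: (@complexI R); rewrite rmorph_sum rmorph1 /=.
  transitivity (\sum_j phi j u 0 * (phi j u 0)^*%C).
    by apply: eq_bigr => j _; rewrite /r add_Re2_Im2 sqr_normc.
  by rewrite (@complete_phi _ _ _ Horth) eqxx.
have t0 : forall j : 'I_N, true -> 0 <= expR (- t * complex.Re (lam j)) * r j.
  by move=> j _; rewrite mulr_ge0 // ltW // expR_gt0.
rewrite lt_def sumr_ge0 // andbT; apply/eqP => /(psumr_eq0P t0) H0.
move: s1; rewrite big1 => [/eqP|j _]; first by rewrite eq_sym oner_eq0.
have := H0 j isT; move/eqP; rewrite mulf_eq0 => /orP [|/eqP //].
by rewrite gt_eqF // expR_gt0.
Qed.

Lemma psiE (R : realType) (N : nat) (adj : rel 'I_N) (phi : 'I_N -> 'cV[R[i]]_N)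
  (t : R) i j v :
  psi adj phi t i j v 0 = rc (heat_kernel adj t v i) * phi j v 0.
Proof. by rewrite /psi /Dmat mul_diag_mx !mxE. Qed.

Lemma frame_sum (R : realType) (N : nat) (adj : rel 'I_N)
  (phi : 'I_N -> 'cV[R[i]]_N)
  (Horth : forall j k, cinner (phi j) (phi k) = (j == k)%:R) (t : R)
  (f : 'cV[R[i]]_N) :
  \sum_(k : 'I_N * 'I_N) `|cinner f (psi adj phi t k.1 k.2)| ^+ 2
  = \sum_v rc (\sum_i heat_kernel adj t v i ^+ 2) * (f v 0 * (f v 0)^*%C).
Proof.
rewrite -(pair_big xpredT xpredT (fun i j => `|cinner f (psi adj phi t i j)| ^+ 2)) /=.
have E : forall i j, cinner f (psi adj phi t i j)
   = \sum_v (f v 0 * rc (heat_kernel adj t v i)) * (phi j v 0)^*%C.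
  move=> i j; rewrite /cinner; apply: eq_bigr => v _.
  by rewrite psiE conjE conjcM /rc conjc_real mulrA.
under eq_bigr => i _ do under eq_bigr => j _ do rewrite E.
under eq_bigr => i _ do rewrite (@parseval R N phi Horth).
rewrite exchange_big /=; apply: eq_bigr => v _.
rewrite rcE rmorph_sum mulr_suml /=; apply: eq_bigr => i _.
rewrite conjcM conjc_real rmorphXn /=; ring.
Qed.

Lemma outer_entry (R : realType) (N : nat) (a : 'cV[R[i]]_N) u w :
  (a *m adjmx a) u w = a u 0 * (a w 0)^*%C.
Proof. by rewrite !mxE big_ord1 !mxE. Qed.

Theorem theorem3p1 (R : realType) (N : nat) (adj : rel 'I_N)
  (Hsimple : simple_graph adj) (Hconn : connected_graph adj)
  (phi : 'I_N -> 'cV[R[i]]_N) (lam : 'I_N -> R[i])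
  (Horth : forall j k, cinner (phi j) (phi k) = (j == k)%:R)
  (Heig : forall j, map_mx (@rc R) (laplacian R adj) *m phi j
                    = lam j *: phi j)
  (t : R) (ht : 0 <= t) :
  is_frame (fun ij : 'I_N * 'I_N => psi adj phi t ij.1 ij.2) /\
  \sum_(i < N) \sum_(j < N) psi adj phi t i j *m adjmx (psi adj phi t i j)
    = \sum_(i < N) Dmat adj t i ^+ 2.
Proof.
set H := heat_kernel adj t.
pose s v := \sum_i H v i ^+ 2.
have spos : forall v, 0 < s v.
  move=> v; rewrite /s (bigD1 v) //=.
  apply: ltr_wpDr.
    by rewrite sumr_ge0 // => i _; rewrite sqr_ge0.
  by rewrite exprn_gt0 // (@heat_pos R N adj Hsimple phi lam Horth Heig).
split.
  pose A := \big[Order.min/1]_v s v.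
  pose B := \big[Order.max/1]_v s v.
  have A0 : 0 < A.
    by apply: (big_rec (fun x => 0 < x)) => // i x _ hx; rewrite lt_min hx spos.
  have A1 : A <= 1.
    by apply: (big_rec (fun x => x <= 1)) => // i x _ hx; rewrite ge_min hx orbT.
  have B1 : 1 <= B.
    by apply: (big_rec (fun x => 1 <= x)) => // i x _ hx; rewrite le_max hx orbT.
  have As : forall v, A <= s v.
    by move=> v; rewrite /A (bigD1 v) //= ge_min lexx.
  have Bs : forall v, s v <= B.
    by move=> v; rewrite /B (bigD1 v) //= le_max lexx.
  exists A, B; split => //; split; first exact: le_trans A1 B1.
  move=> f; rewrite frame_sum // /cinner mulr_sumr mulr_sumr.
  have p0 : forall v, 0 <= f v 0 * (f v 0)^*%C.
    by move=> v; rewrite -sqr_normc exprn_ge0.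
  split; apply: ler_sum => v _; rewrite conjE.
    by apply: ler_wpM2r => //; rewrite /rc lecR; exact: As.
  by apply: ler_wpM2r => //; rewrite /rc lecR; exact: Bs.
apply/matrixP => u w; rewrite !summxE.
have E : forall i, \sum_j (psi adj phi t i j *m adjmx (psi adj phi t i j)) u w
   = rc (H u i) * rc (H w i) * (u == w)%:R.
  move=> i; rewrite -(@complete_phi _ _ _ Horth u w) mulr_sumr.
  apply: eq_bigr => j _; rewrite outer_entry !psiE conjcM.
  rewrite /rc conjc_real; ring.
under eq_bigr => i _ do rewrite summxE E.
apply: eq_bigr => i _.
rewrite expr2 -mulmxE /Dmat mul_diag_mx !mxE.
by case: eqP => [->|_]; rewrite ?mulr1 ?mulr0.
Qed.
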